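(* Let $S$ be a memory system satisfying the Causality assumption, let $n,m,v\ge1$, let $\Omega$ be a witness for $S(n,m,v)$, and let $\tau$ be an unambiguous trace of $S(n,m,v)$. If the graph $G(\Omega)(\tau)$ has a (directed) cycle, then it has a $k$-nice cycle for some $k$ with $1\le k\le\min\{n,m\}$.
   Context: Notation: $\mathbb{N}_n=\{1,\dots,n\}$, $\mathbb{W}_n=\{0,\dots,n\}$. Memory events $E(n,m,v)=\{R,W\}\times\mathbb{N}_n\times\mathbb{N}_m\times\mathbb{W}_v$; for $e=\langle a,b,c,d\rangle$, $op(e)=a$, $proc(e)=b$, $loc(e)=c$, $data(e)=d$; $0$ models the initial value of every location. A memory system is a family $S=(S(n,m,v))_{n,m,v\ge1}$, $S(n,m,v)$ a regular set of finite runs over an alphabet $E^a(n,m,v)\supseteq E(n,m,v)$ (other letters are internal events). The trace of a run is its subsequence of memory events; traces of $S(n,m,v)$ are traces of its runs. For a sequence $\tau$ of memory events with positions $1,\dots,|\tau|$: $P(\tau,i)=\{k: proc(\tau(k))=i\}$, $L(\tau,j)=\{k: loc(\tau(k))=j\}$, $L^w(\tau,j)=\{k\in L(\tau,j): op(\tau(k))=W\}$, $L^r(\tau,j)=\{k\in L(\tau,j): op(\tau(k))=R\}$. A trace $\tau$ is unambiguous if for every location $j$ and $x\in L^w(\tau,j)$, $data(\tau(x))\ne0$ and $data(\tau(x))\ne data(\tau(y))$ for all $y\in L^w(\tau,j)\setminus\{x\}$. Causality assumption: for all $n,m,v\ge1$, every trace $\tau$ of $S(n,m,v)$, every location $j$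 and every $x\in L^r(\tau,j)$, either $data(\tau(x))=0$ or there is $y\in L^w(\tau,j)$ with $data(\tau(x))=data(\tau(y))$. $M(\tau,i)=\{\langle u,v\rangle: u,v\in P(\tau,i), u<v\}$. A witness $\Omega$ for $S(n,m,v)$ assigns to every trace $\tau$ of $S(n,m,v)$ and location $j$ a strict total order $\Omega(\tau,j)$ on $L^w(\tau,j)$. For unambiguous $\tau$, $\Omega^e(\tau,j)\subseteq L(\tau,j)^2$: $\langle x,y\rangle\in\Omega^e(\tau,j)$ iff (1) $data(\tau(x))=data(\tau(y))$, $op(\tau(x))=W$, $op(\tau(y))=R$; or (2) $data(\tau(x))=0$ and $data(\tau(y))\ne0$; or (3) there are $a,b\in L^w(\tau,j)$ with $\langle a,b\rangle\in\Omega(\tau,j)$, $data(\tau(a))=data(\tau(x))$, $data(\tau(b))=data(\tau(y))$. $G(\Omega)(\tau)$ is the directed graph on $\{1,\dots,|\tau|\}$ with edge set $\bigcup_{1\le i\le n}M(\tau,i)\cup\bigcup_{1\le j\le m}\Omega^e(\tau,j)$. For $k\ge1$ let $\oplus$ denote addition in the cyclic group on $\mathbb{N}_k$ with identity $k$ (so $x\oplus1=x+1$ for $x<k$ and $k\oplus1=1$). A $k$-nice cycle in $G(\Omega)(\tau)$ is a sequence $u_1,v_1,\dots,u_k,v_k$ of pairwise distinct vertices such that: (i) for every $1\le x\le k$, $\langle u_x,v_x\rangle\in M(\tau,i)$ for some processor $i$ and $\langle v_x,u_{x\oplus1}\rangle\in\Omega^e(\tau,j)$ for some location $j$; (ii)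 for $1\le x<y\le k$, if $\langle u_x,v_x\rangle\in M(\tau,i)$ and $\langle u_y,v_y\rangle\in M(\tau,i')$ then $i\ne i'$; (iii) for $1\le x<y\le k$, if $\langle v_x,u_{x\oplus1}\rangle\in\Omega^e(\tau,j)$ and $\langle v_y,u_{y\oplus1}\rangle\in\Omega^e(\tau,j')$ then $j\ne j'$. *)

(* Defs.v *)
From mathcomp Require Import all_boot.
Set Implicit Arguments. Unset Strict Implicit. Unset Printing Implicit Defensive.

Inductive op_t := OpR | OpW.

(* e = <op, proc, loc, data>; processors/locations are 1-based nats,
   data 0 is the initial value. *)
Record mevent := MEv { op : op_t; proc : nat; loc : nat; data : nat }.

Definition in_E (n m v : nat) (e : mevent) : Prop :=
  1 <= proc e <= n /\ 1 <= loc e <= m /\ data e <= v.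

Inductive letter (I : Type) := Mem of mevent | Int of I.

Definition trace_of_run (I : Type) (r : seq (letter I)) : seq mevent :=
  pmap (fun l => match l with Mem e => Some e | Int _ => None end) r.

Definition regular (A : Type) (Lang : seq A -> Prop) : Prop :=
  exists (Q : finType) (q0 : Q) (d : Q -> A -> Q) (F : pred Q),
    forall r, Lang r <-> F (foldl d q0 r).

Record memsys := MemSys {
  ilet : nat -> nat -> nat -> finType;
  runs : forall n m v, seq (letter (ilet n m v)) -> Prop;
  runs_alphabet : forall n m v (r : seq (letter (ilet n m v))), runs r ->
     forall k, k < size (trace_of_run r) ->
       in_E n m v (nth (MEv OpR 0 0 0) (trace_of_run r) k);
  runs_regular : forall n m v, 1 <= n -> 1 <= m -> 1 <= v ->
     regular (@runs n m v)
}.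

Definition is_trace (S : memsys) (n m v : nat) (tau : seq mevent) : Prop :=
  exists r : seq (letter (ilet S n m v)), @runs S n m v r /\ trace_of_run r = tau.

Definition dflt_ev : mevent := MEv OpR 0 0 0.
Definition at_ (tau : seq mevent) (k : nat) : mevent := nth dflt_ev tau k.-1.
Definition is_pos (tau : seq mevent) (k : nat) : Prop := 1 <= k <= size tau.

Definition Pset (tau : seq mevent) (i k : nat) : Prop :=
  is_pos tau k /\ proc (at_ tau k) = i.
Definition Lset (tau : seq mevent) (j k : nat) : Prop :=
  is_pos tau k /\ loc (at_ tau k) = j.
Definition Lw (tau : seq mevent) (j k : nat) : Prop :=
  Lset tau j k /\ op (at_ tau k) = OpW.
Definition Lr (tau : seq mevent) (j k : nat) : Prop :=
  Lset tau j k /\ op (at_ tau k) = OpR.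

Definition unambiguous (tau : seq mevent) : Prop :=
  forall j x, Lw tau j x ->
    data (at_ tau x) <> 0 /\
    forall y, Lw tau j y -> y <> x -> data (at_ tau x) <> data (at_ tau y).

Definition causality (S : memsys) : Prop :=
  forall n m v, 1 <= n -> 1 <= m -> 1 <= v ->
  forall tau, is_trace S n m v tau ->
  forall j x, Lr tau j x ->
    data (at_ tau x) = 0 \/
    exists y, Lw tau j y /\ data (at_ tau x) = data (at_ tau y).

Definition M (tau : seq mevent) (i u w : nat) : Prop :=
  Pset tau i u /\ Pset tau i w /\ u < w.

Definition witness_t := seq mevent -> nat -> nat -> nat -> Prop.

Definition strict_total_on (A : nat -> Prop) (rel : nat -> nat -> Prop) : Prop :=
  (forall x y, rel x y -> A x /\ A y) /\
  (forall x, ~ rel x x) /\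
  (forall x y z, rel x y -> rel y z -> rel x z) /\
  (forall x y, A x -> A y -> x <> y -> rel x y \/ rel y x).

Definition is_witness (S : memsys) (n m v : nat) (Om : witness_t) : Prop :=
  forall tau, is_trace S n m v tau ->
  forall j, 1 <= j <= m -> strict_total_on (Lw tau j) (Om tau j).

Definition Omega_e (Om : witness_t) (tau : seq mevent) (j x y : nat) : Prop :=
  Lset tau j x /\ Lset tau j y /\
  ( (data (at_ tau x) = data (at_ tau y) /\ op (at_ tau x) = OpW
       /\ op (at_ tau y) = OpR)
  \/ (data (at_ tau x) = 0 /\ data (at_ tau y) <> 0)
  \/ (exists a b, Lw tau j a /\ Lw tau j b /\ Om tau j a b /\
        data (at_ tau a) = data (at_ tau x) /\
        data (at_ tau b) = data (at_ tau y)) ).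

Definition Gedge (n m : nat) (Om : witness_t) (tau : seq mevent) (x y : nat) : Prop :=
  (exists i, 1 <= i <= n /\ M tau i x y) \/
  (exists j, 1 <= j <= m /\ Omega_e Om tau j x y).

Definition has_cycle (n m : nat) (Om : witness_t) (tau : seq mevent) : Prop :=
  exists (l : nat) (w : nat -> nat), 1 <= l /\
    (forall t, t < l -> is_pos tau (w t)) /\
    (forall t s, t < l -> s < l -> w t = w s -> t = s) /\
    (forall t, t < l -> Gedge n m Om tau (w t) (w (t.+1 %% l))).

Definition csucc (k x : nat) : nat := if x < k then x.+1 else 1.

Definition nice_cycle (n m : nat) (Om : witness_t) (tau : seq mevent) (k : nat)
    (u w : nat -> nat) : Prop :=
  (forall x y, 1 <= x <= k -> 1 <= y <= k -> u x = u y -> x = y) /\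
  (forall x y, 1 <= x <= k -> 1 <= y <= k -> w x = w y -> x = y) /\
  (forall x y, 1 <= x <= k -> 1 <= y <= k -> u x <> w y) /\
  (forall x, 1 <= x <= k -> is_pos tau (u x) /\ is_pos tau (w x)) /\
  (forall x, 1 <= x <= k ->
     (exists i, 1 <= i <= n /\ M tau i (u x) (w x)) /\
     (exists j, 1 <= j <= m /\ Omega_e Om tau j (w x) (u (csucc k x)))) /\
  (forall x y, 1 <= x -> x < y -> y <= k -> forall i i',
     1 <= i <= n -> 1 <= i' <= n ->
     M tau i (u x) (w x) -> M tau i' (u y) (w y) -> i <> i') /\
  (forall x y, 1 <= x -> x < y -> y <= k -> forall j j',
     1 <= j <= m -> 1 <= j' <= m ->
     Omega_e Om tau j (w x) (u (csucc k x)) ->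
     Omega_e Om tau j' (w y) (u (csucc k y)) -> j <> j').

Definition has_nice_cycle (n m : nat) (Om : witness_t) (tau : seq mevent) (k : nat) : Prop :=
  exists u w : nat -> nat, nice_cycle n m Om tau k u w.

(* Main.v *)
Require Import Defs.
From mathcomp Require Import all_boot.
From mathcomp Require Import zify.
From Stdlib Require Import Classical.

Set Implicit Arguments. Unset Strict Implicit. Unset Printing Implicit Defensive.

Lemma modwin L b t s : b <= t < b + L -> b <= s < b + L -> t %% L = s %% L -> t = s.
Proof.
wlog ts : t s / t <= s.
  move=> H h1 h2 e; case: (leqP t s) => h; first exact: H.
  apply/esym; apply: H => //; exact: ltnW.
move=> /andP[h1 h2] /andP[h3 h4] e.
have : L %| s - t by rewrite -eqn_mod_dvd // e eqxx.
case: (posnP (s - t)) => [z|pos]; first lia.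
move/(dvdn_leq pos) => h; lia.
Qed.

Lemma pigeon k N (f : nat -> nat) :
  (forall x, 1 <= x <= k -> 1 <= f x <= N) ->
  (forall x y, 1 <= x <= k -> 1 <= y <= k -> f x = f y -> x = y) -> k <= N.
Proof.
move=> Hr Hi.
have : size (map f (iota 1 k)) <= size (iota 1 N).
  apply: uniq_leq_size.
    rewrite map_inj_in_uniq ?iota_uniq //.
    move=> x y; rewrite !mem_iota => hx hy; apply: Hi; lia.
  move=> y /mapP [x]; rewrite mem_iota => hx ->; rewrite mem_iota.
  have := Hr x; lia.
by rewrite size_map !size_iota.
Qed.

Section Main.
Variables (n m : nat) (Om : witness_t) (tau : seq mevent).

Local Notation dd x := (data (at_ tau x)).
Local Notation Oe := (Omega_e Om tau).
Local Notation EE := (Gedge n m Om tau).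

Definition cycW l (W : nat -> nat) :=
  1 <= l /\ (forall t, is_pos tau (W t)) /\ (forall t, W (t + l) = W t) /\
  (forall b t s, b <= t < b + l -> b <= s < b + l -> W t = W s -> t = s) /\
  (forall t, EE (W t) (W t.+1)).

Lemma mkcyc L f : 0 < L -> (forall t, t < L -> is_pos tau (f t)) ->
  (forall t s, t < L -> s < L -> f t = f s -> t = s) ->
  (forall t, t < L -> EE (f t) (f (t.+1 %% L))) ->
  cycW L (fun t => f (t %% L)).
Proof.
move=> L0 Hp Hi He; split => //; split; [|split; [|split]].
- move=> t; apply: Hp; exact: ltn_pmod.
- move=> t /=; by rewrite modnDr.
- move=> b t s h1 h2 /= e; apply: (modwin h1 h2); apply: Hi => //; exact: ltn_pmod.
- move=> t /=.
  have e : (t %% L).+1 %% L = t.+1 %% L by rewrite -[(t %% L).+1]addn1 -[t.+1]addn1 modnDml.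
  rewrite -e; apply: He; exact: ltn_pmod.
Qed.

Lemma shortcut l W a c : cycW l W -> a.+2 <= c -> c <= a + l -> EE (W a) (W c) ->
  cycW (a + l - c).+1 (fun t => W (c + t %% (a + l - c).+1)).
Proof.
move=> [l1 [Hp [Hper [Hw He]]]] h1 h2 Hac.
apply: (mkcyc (f := fun t => W (c + t))) => //.
- move=> t s ht hs e.
  have : c + t = c + s by apply: (Hw c _ _ _ _ e); lia.
  lia.
- move=> t ht; case: (ltnP t.+1 (a + l - c).+1) => h.
  + rewrite modn_small // addnS; exact: He.
  + have et : t = a + l - c by lia.
    rewrite et modnn addn0.
    have -> : c + (a + l - c) = a + l by lia.
    by rewrite Hper.
Qed.

Hypothesis Hun : unambiguous tau.
Hypothesis Hcaus : forall j x, Lr tau j x ->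
    data (at_ tau x) = 0 \/
    exists y, Lw tau j y /\ data (at_ tau x) = data (at_ tau y).
Hypothesis Hwit : forall j, 1 <= j <= m -> strict_total_on (Lw tau j) (Om tau j).

Lemma wnz j a : Lw tau j a -> dd a <> 0.
Proof. by move=> H; case: (Hun H). Qed.

Lemma wuniq j a b : Lw tau j a -> Lw tau j b -> dd a = dd b -> a = b.
Proof.
move=> Ha Hb e; case: (PeanoNat.Nat.eq_dec a b) => // ne.
exfalso; apply: (proj2 (Hun Ha) b Hb) => //; by apply: nesym.
Qed.

Lemma classify j x : Lset tau j x -> dd x = 0 \/ exists a, Lw tau j a /\ dd a = dd x.
Proof.
move=> Lx; case eo: (op (at_ tau x)).
- case: (Hcaus (j:=j) (x:=x)); first by split.
  + by left.
  + by move=> [y [Ly e]]; right; exists y.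
- by right; exists x.
Qed.

Lemma C1 j x y : Lset tau j x -> Lset tau j y -> dd x = dd y ->
  op (at_ tau x) = OpW -> op (at_ tau y) = OpR -> Oe j x y.
Proof. by move=> *; split => //; split => //; left. Qed.

Lemma C2 j x y : Lset tau j x -> Lset tau j y -> dd x = 0 -> dd y <> 0 -> Oe j x y.
Proof. by move=> *; split => //; split => //; right; left. Qed.

Lemma C3 j x y a b : Lset tau j x -> Lset tau j y -> Lw tau j a -> Lw tau j b ->
  Om tau j a b -> dd a = dd x -> dd b = dd y -> Oe j x y.
Proof. by move=> *; split => //; split => //; right; right; exists a, b. Qed.

Lemma Oirr j x : 1 <= j <= m -> ~ Oe j x x.
Proof.
move=> hj [Lx [_ C]]; have [_ [Lirr _]] := Hwit hj.
case: C => [[e1 [o1 o2]]|[[z1 nz1]|[a [b [Ha [Hb [Hab [ea eb]]]]]]]].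
- by rewrite o1 in o2.
- by [].
- have e := wuniq Ha Hb (etrans ea (esym eb)); subst b; exact: Lirr Hab.
Qed.

Lemma Otrans j x y z : 1 <= j <= m -> Oe j x y -> Oe j y z -> Oe j x z.
Proof.
move=> hj [Lx [Ly Cxy]] [_ [Lz Cyz]].
have [_ [_ [Htr _]]] := Hwit hj.
case: Cxy => [[e1 [o1 o2]]|[[z1 nz1]|[a [b [Ha [Hb [Hab [ea eb]]]]]]]];
case: Cyz => [[e1' [o1' o2']]|[[z1' nz1']|[a' [b' [Ha' [Hb' [Hab' [ea' eb']]]]]]]].
- by rewrite o1' in o2.
- by exfalso; apply: (wnz (conj Lx o1)); rewrite e1.
- by apply: (C3 Lx Lz Ha' Hb' Hab') => //; rewrite ea' e1.
- by apply: C2 => //; rewrite -e1'.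
- by case: (nz1 z1').
- by apply: C2 => //; rewrite -eb'; exact: wnz Hb'.
- by apply: (C3 Lx Lz Ha Hb Hab) => //; rewrite eb e1'.
- by exfalso; apply: (wnz Hb); rewrite eb.
- have e := wuniq Hb Ha' (etrans eb (esym ea')); subst a'.
  exact: (C3 Lx Lz Ha Hb' (Htr _ _ _ Hab Hab')).
Qed.

Lemma Oneg j x y c : 1 <= j <= m -> Oe j x y -> Lset tau j c -> Oe j x c \/ Oe j c y.
Proof.
move=> hj Hxy Lc; have [Ld [Lirr [Htr Htot]]] := Hwit hj.
case: (Hxy) => Lx [Ly C].
have nzy : dd y <> 0.
  case: C => [[e1 [o1 o2]]|[[z1 nz1]|[a [b [Ha [Hb [Hab [ea eb]]]]]]]] //.
  - by rewrite -e1; exact: wnz (conj Lx o1).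
  - by rewrite -eb; exact: wnz Hb.
case: (classify Lc) => [zc | [wc [Hwc ec]]].
  by right; apply: C2.
case: C => [[e1 [o1 o2]]|[[z1 nz1]|[a [b [Ha [Hb [Hab [ea eb]]]]]]]].
- case: (PeanoNat.Nat.eq_dec wc x) => [ewc|ne].
  + subst wc; case eo: (op (at_ tau c)).
    * by left; apply: C1.
    * right; have ecx : c = x := wuniq (conj Lc eo) Hwc (esym ec).
      by rewrite ecx.
  + case: (Htot wc x Hwc (conj Lx o1) ne) => H.
    * by right; apply: (C3 Lc Ly Hwc (conj Lx o1) H).
    * by left; apply: (C3 Lx Lc (conj Lx o1) Hwc H).
- by left; apply: C2 => //; rewrite -ec; exact: wnz Hwc.
- case: (PeanoNat.Nat.eq_dec wc a) => [e|ne].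
  + by subst wc; right; apply: (C3 Lc Ly Ha Hb Hab).
  + case: (Htot wc a Hwc Ha ne) => H.
    * by right; apply: (C3 Lc Ly Hwc Hb (Htr _ _ _ H Hab)).
    * by left; apply: (C3 Lx Lc Ha Hwc H).
Qed.

Lemma Ocross j p q r s : 1 <= j <= m -> Oe j p q -> Oe j r s -> Oe j p s \/ Oe j r q.
Proof.
move=> hj Hpq Hrs; case: (Oneg hj Hpq (proj1 Hrs)) => H.
- left; exact: Otrans hj H Hrs.
- by right.
Qed.

Lemma Mtrans i i' x y z : M tau i x y -> M tau i' y z -> M tau i x z.
Proof.
move=> [Px [[_ py] xy]] [[_ py'] [[Pz pz] yz]].
split => //; split; last lia.
split => //; congruence.
Qed.

Lemma Mcross i p q r s : M tau i p q -> M tau i r s -> M tau i p s \/ M tau i r q.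
Proof.
move=> [Pp [Pq pq]] [Pr [Ps rs]]; case: (ltnP p s) => h.
- by left; split => //; split.
- by right; split => //; split => //; lia.
Qed.

Lemma Eirr x : ~ EE x x.
Proof.
case => [[i [_ [_ [_ h]]]]| [j [hj H]]]; first by rewrite ltnn in h.
exact: Oirr hj H.
Qed.

Definition isM (W : nat -> nat) t := exists i, 1 <= i <= n /\ M tau i (W t) (W t.+1).
Definition isO (W : nat -> nat) t := exists j, 1 <= j <= m /\ Oe j (W t) (W t.+1).
Definition uf (W : nat -> nat) s0 x := W (s0 + 2 * (x - 1)).
Definition wf (W : nat -> nat) s0 x := W (s0 + 2 * (x - 1)).+1.

Lemma mainl l : forall W, cycW l W ->
  exists k, 1 <= k <= minn n m /\ has_nice_cycle n m Om tau k.
Proof.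
elim/ltn_ind: l => l IH W Hc.
case: (classic (exists a c, [/\ a.+2 <= c, c <= a + l & EE (W a) (W c)]))
  => [[a [c [h1 h2 he]]]|Hno].
  apply: (IH _ _ _ (shortcut Hc h1 h2 he)); lia.
move: (Hc) => [l1 [Hp [Hper [Hw He]]]].
have chord a c : a.+2 <= c -> c <= a + l -> EE (W a) (W c) -> False.
  by move=> *; apply: Hno; exists a, c.
have l2 : 2 <= l.
  case: (ltnP 1 l) => // hl; have el : l = 1 by lia.
  have := He 0; have -> : W 1 = W 0 by rewrite -(Hper 0) el.
  by move/Eirr.
have Hed t : isM W t \/ isO W t := He t.
have noMM t : isM W t -> isM W t.+1 -> False.
  move=> [i [hi H1]] [i' [_ H2]]; apply: (chord t t.+2); [lia|lia|].
  left; exists i; split => //; exact: Mtrans H1 H2.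
have noOO t : isO W t -> isO W t.+1 -> False.
  move=> [j [hj H1]] [j' [hj' H2]].
  have ejj : j = j'.
    by case: H1 => _ [[_ <-] _]; case: H2 => [[_ <-] _].
  subst j'; apply: (chord t t.+2); [lia|lia|].
  right; exists j; split => //; exact: Otrans hj H1 H2.
have excl t : isM W t -> isO W t -> False.
  by move=> h1 h2; case: (Hed t.+1) => h; [exact: noMM h1 h | exact: noOO h2 h].
have altM t : isM W t -> isO W t.+1.
  by move=> h; case: (Hed t.+1) => // h'; case: (noMM _ h h').
have altO t : isO W t -> isM W t.+1.
  by move=> h; case: (Hed t.+1) => // h'; case: (noOO _ h h').
have [s0 [hs0 Ms0]] : exists s0, s0 <= 1 /\ isM W s0.
  by case: (Hed 0) => h; [exists 0 | exists 1]; split => //; exact: altO.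
have par x : isM W (s0 + 2 * x).
  elim: x => [|x IHx]; first by rewrite muln0 addn0.
  have := altO _ (altM _ IHx).
  by have -> : (s0 + 2 * x).+2 = s0 + 2 * x.+1 by lia.
have perM t : isM W t -> isM W (t + l).
  move=> [i [hi H]]; exists i; split => //.
  by rewrite Hper -addSn Hper.
have [k ek] : exists k, l = 2 * k.
  exists l./2; have h := odd_double_half l.
  case: (boolP (odd l)) => [ol | el].
  - exfalso; rewrite ol -mul2n /= in h.
    have := perM _ Ms0.
    have -> : s0 + l = (s0 + 2 * l./2).+1 by lia.
    move=> hM; apply: (excl _ hM); exact: altM (par _).
  - rewrite (negbTE el) add0n in h.
    by rewrite -{1}h -mul2n.
have k1 : 1 <= k by lia.
have ucs x : 1 <= x <= k -> uf W s0 (csucc k x) = W (s0 + 2 * x).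
  move=> hx; rewrite /uf /csucc; case: ifP => h.
  - congr W; lia.
  - have -> : s0 + 2 * x = s0 + l by lia.
    rewrite Hper; congr W; lia.
have c1 : forall x y, 1 <= x <= k -> 1 <= y <= k -> uf W s0 x = uf W s0 y -> x = y.
  move=> x y hx hy e.
  have : s0 + 2 * (x - 1) = s0 + 2 * (y - 1) by apply: (Hw s0 _ _ _ _ e); lia.
  lia.
have c2 : forall x y, 1 <= x <= k -> 1 <= y <= k -> wf W s0 x = wf W s0 y -> x = y.
  move=> x y hx hy e.
  have : (s0 + 2 * (x - 1)).+1 = (s0 + 2 * (y - 1)).+1
    by apply: (Hw s0 _ _ _ _ e); lia.
  lia.
have c3 : forall x y, 1 <= x <= k -> 1 <= y <= k -> uf W s0 x <> wf W s0 y.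
  move=> x y hx hy e.
  have : s0 + 2 * (x - 1) = (s0 + 2 * (y - 1)).+1
    by apply: (Hw s0 _ _ _ _ e); lia.
  lia.
have c4 : forall x, 1 <= x <= k -> is_pos tau (uf W s0 x) /\ is_pos tau (wf W s0 x).
  by move=> x _; split; apply: Hp.
have c5 : forall x, 1 <= x <= k ->
     (exists i, 1 <= i <= n /\ M tau i (uf W s0 x) (wf W s0 x)) /\
     (exists j, 1 <= j <= m /\ Oe j (wf W s0 x) (uf W s0 (csucc k x))).
  move=> x hx; split; first exact: (par (x - 1)).
  rewrite ucs //.
  case: (altM _ (par (x - 1))) => j [hj H]; exists j; split => //.
  have -> : s0 + 2 * x = (s0 + 2 * (x - 1)).+2 by lia.
  exact: H.
have c6 : forall x y, 1 <= x -> x < y -> y <= k -> forall i i',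
     1 <= i <= n -> 1 <= i' <= n ->
     M tau i (uf W s0 x) (wf W s0 x) -> M tau i' (uf W s0 y) (wf W s0 y) -> i <> i'.
  move=> x y hx hxy hy i i' hi hi' H1 H2 eii; subst i'.
  case: (Mcross H1 H2) => H.
  - apply: (chord (s0 + 2 * (x - 1)) (s0 + 2 * (y - 1)).+1); [lia|lia|].
    by left; exists i; split.
  - apply: (chord (s0 + 2 * (y - 1)) ((s0 + 2 * (x - 1)).+1 + l)); [lia|lia|].
    by rewrite Hper; left; exists i; split.
have c7 : forall x y, 1 <= x -> x < y -> y <= k -> forall j j',
     1 <= j <= m -> 1 <= j' <= m ->
     Oe j (wf W s0 x) (uf W s0 (csucc k x)) ->
     Oe j' (wf W s0 y) (uf W s0 (csucc k y)) -> j <> j'.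
  move=> x y hx hxy hy j j' hj hj' H1 H2 ejj; subst j'.
  rewrite ucs in H1; last lia.
  rewrite ucs in H2; last lia.
  case: (Ocross hj H1 H2) => H.
  - apply: (chord (s0 + 2 * (x - 1)).+1 (s0 + 2 * y)); [lia|lia|].
    by right; exists j; split.
  - apply: (chord (s0 + 2 * (y - 1)).+1 (s0 + 2 * x + l)); [lia|lia|].
    by rewrite Hper; right; exists j; split.
have Hnice : nice_cycle n m Om tau k (uf W s0) (wf W s0).
  exact: (conj c1 (conj c2 (conj c3 (conj c4 (conj c5 (conj c6 c7)))))).
have kn : k <= n.
  apply: (pigeon (f := fun x => proc (at_ tau (uf W s0 x)))).
  - move=> x hx; case: (proj1 (c5 x hx)) => i [hi [[_ ->] _]] //.
  - move=> x y hx hy e.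
    case: (proj1 (c5 x hx)) => i [hi Hi].
    case: (proj1 (c5 y hy)) => i' [hi' Hi'].
    have ei : i = i'.
      by move: e; case: Hi => [[_ ->] _]; case: Hi' => [[_ ->] _].
    case: (ltngtP x y) => // h; exfalso.
    + by apply: (c6 x y _ h _ i i' hi hi' Hi Hi'); lia.
    + by apply: (c6 y x _ h _ i' i hi' hi Hi' Hi); lia.
have km : k <= m.
  apply: (pigeon (f := fun x => loc (at_ tau (wf W s0 x)))).
  - move=> x hx; case: (proj2 (c5 x hx)) => j [hj [[_ ->] _]] //.
  - move=> x y hx hy e.
    case: (proj2 (c5 x hx)) => j [hj Hj].
    case: (proj2 (c5 y hy)) => j' [hj' Hj'].
    have ej : j = j'.
      by move: e; case: Hj => [[_ ->] _]; case: Hj' => [[_ ->] _].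
    case: (ltngtP x y) => // h; exfalso.
    + by apply: (c7 x y _ h _ j j' hj hj' Hj Hj'); lia.
    + by apply: (c7 y x _ h _ j' j hj' hj Hj' Hj); lia.
exists k; split; first lia.
by exists (uf W s0), (wf W s0).
Qed.

End Main.


Theorem theorem6p1 (S : memsys) (HC : causality S) (n m v : nat)
  (hn : 1 <= n) (hm : 1 <= m) (hv : 1 <= v)
  (Om : witness_t) (HOm : is_witness S n m v Om)
  (tau : seq mevent) (Htr : is_trace S n m v tau) (Hun : unambiguous tau)
  (Hcyc : has_cycle n m Om tau) :
  exists k, 1 <= k <= minn n m /\ has_nice_cycle n m Om tau k.
Proof.
case: Hcyc => l [w [l1 [Hp [Hi He]]]].
have Hc := mkcyc l1 Hp Hi He.
exact: (mainl Hun (HC n m v hn hm hv tau Htr) (HOm tau Htr) Hc).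
Qed.
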